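(* Let $X$ be a real Banach space with dual $X^*$, let $A\colon X\rightrightarrows X^*$ be a set-valued operator, let $C$ be a nonempty closed convex subset of $X$, and let $(z,z^* )\in X\times X^*$. Define $I_C\colon X\rightrightarrows X^*$ by $I_C(x)=\{0\}$ if $x\in C$ and $I_C(x)=\varnothing$ otherwise, and for $a\in C$ let $T_C(a)=\{x\in X:\sup\langle x,N_C(a)\rangle\le 0\}$. Then $(z,z^* )$ is monotonically related to $\operatorname{gra}(A+N_C)$ if and only if $(z,z^* )$ is monotonically related to $\operatorname{gra}(A+I_C)$ and $z\in\bigcap_{a\in\operatorname{dom}A\cap C}\big(a+T_C(a)\big)$.
   Context: $\langle\cdot,\cdot\rangle$ is the pairing between $X$ and $X^*$. For $B\colon X\rightrightarrows X^*$, $\operatorname{gra}B=\{(x,x^* ): x^*\in Bx\}$, $\operatorname{dom}B=\{x: Bx\neq\varnothing\}$, and sums are $(B_1+B_2)x=\{b_1^*+b_2^*: b_1^*\in B_1x,\ b_2^*\in B_2x\}$. A point $(z,z^* )$ is monotonically related to a set $G\subseteq X\times X^*$ if $\langle x-z,x^*-z^*\rangle\ge 0$ for all $(x,x^* )\in G$. The normal cone operator is $N_C(x)=\{x^*\in X^*:\sup_{c\in C}\langle c-x,x^*\rangle\le 0\}$ for $x\in C$ and $N_C(x)=\varnothing$ for $x\notin C$. *)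

(* Defs.v *)
From HB Require Import structures.
From mathcomp Require Import all_boot all_order all_algebra.
From mathcomp Require Import all_classical all_reals.
From mathcomp Require Import ereal topology normedtype convex.
Set Implicit Arguments. Unset Strict Implicit. Unset Printing Implicit Defensive.
Import Order.TTheory GRing.Theory Num.Theory.
Import numFieldNormedType.Exports.
Local Open Scope classical_set_scope.
Local Open Scope ring_scope.

Section Defs.
Context {R : realType} {X : normedModType R}.

(* Elements of the dual X^*: continuous linear functionals X -> R.
   Pairing <x, x^*> := x^* x. *)
Definition is_dual (f : X -> R) : Prop :=
  (forall (a : R) (x y : X), f (a *: x + y) = a * f x + f y) /\ continuous f.

(* Set-valued operators X ⇉ X^* are maps X -> set (X -> R) whose values
   consist of dual elements (hypothesis stated in the theorem). *)
Definition gra (B : X -> set (X -> R)) : set (X * (X -> R)) :=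
  [set p | B p.1 p.2].

Definition dom (B : X -> set (X -> R)) : set X := [set x | B x !=set0].

Definition op_sum (B1 B2 : X -> set (X -> R)) : X -> set (X -> R) :=
  fun x => [set b1 \+ b2 | b1 in B1 x & b2 in B2 x].

Definition mono_related (z : X) (zs : X -> R) (G : set (X * (X -> R))) : Prop :=
  forall x xs, G (x, xs) -> 0 <= (xs \- zs) (x - z).

Definition normal_cone (C : set X) (x : X) : set (X -> R) :=
  [set xs | C x /\ is_dual xs /\
            (ereal_sup [set (xs (c - x))%:E | c in C] <= 0)%E].

Definition ind_op (C : set X) (x : X) : set (X -> R) :=
  [set xs | C x /\ xs = (fun _ => 0)].

Definition tangent_cone (C : set X) (a : X) : set X :=
  [set x | (ereal_sup [set (xs x)%:E | xs in normal_cone C a] <= 0)%E].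

End Defs.

(* Main.v *)
Require Import Defs.
From HB Require Import structures.
From mathcomp Require Import all_boot all_order all_algebra.
From mathcomp Require Import all_classical all_reals.
From mathcomp Require Import ereal topology normedtype convex.
From mathcomp Require Import ring lra.
Import Order.TTheory GRing.Theory Num.Theory.
Import numFieldNormedType.Exports.
Local Open Scope classical_set_scope.
Local Open Scope ring_scope.

Section Aux.
Context {R : realType} {X : normedModType R}.

Lemma dual0 (f : X -> R) : is_dual f -> f 0 = 0.
Proof.
case=> lin _; have := lin 1 0 0; rewrite scale1r addr0 mul1r => h.
have : f 0 + f 0 - f 0 = f 0 - f 0 by rewrite -h.
by rewrite addrK subrr.
Qed.

Lemma dualN (f : X -> R) v : is_dual f -> f (- v) = - f v.
Proof.
move=> fd; have [lin _] := fd; have := lin (-1) v 0.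
by rewrite addr0 scaleN1r mulN1r dual0 // addr0.
Qed.

Lemma dualB (f : X -> R) u v : is_dual f -> f (u - v) = f u - f v.
Proof.
move=> fd; have [lin _] := fd; have := lin 1 u (- v).
by rewrite scale1r mul1r dualN.
Qed.

Lemma dualZ (f : X -> R) t : is_dual f -> is_dual (fun v => t * f v).
Proof.
case=> lin fc; split.
  by move=> a x y; rewrite lin mulrDr mulrA mulrA (mulrC t).
by move=> x; apply: cvgMl_tmp; exact: fc x.
Qed.

Lemma nc_le0 (C : set X) x (ns : X -> R) c :
  normal_cone C x ns -> C c -> ns (c - x) <= 0.
Proof.
case=> _ [_ hs] Cc.
have : ((ns (c - x))%:E <= ereal_sup [set (ns (c - x))%:E | c in C])%E.
  by apply: ereal_sup_ubound; exists c.
move=> h; have := le_trans h hs; by rewrite lee_fin.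
Qed.

Lemma nc_scale (C : set X) x (ns : X -> R) t : 0 <= t ->
  normal_cone C x ns -> normal_cone C x (fun v => t * ns v).
Proof.
move=> t0 hn; have [Cx [nd _]] := hn; split => //; split; first exact: dualZ.
apply: ge_ereal_sup => _ [c Cc <-]; rewrite lee_fin.
by apply: mulr_ge0_le0 => //; exact: nc_le0 hn Cc.
Qed.

Lemma nc_zero (C : set X) x : C x -> normal_cone C x (fun _ => 0).
Proof.
move=> Cx; split => //; split.
  split; first by move=> a u v; rewrite mulr0 addr0.
  by move=> u; exact: cvg_cst.
by apply: ge_ereal_sup => _ [c Cc <-].
Qed.

End Aux.

Theorem lemma2p6 (R : realType) (X : completeNormedModType R)
  (A : X -> set (X -> R)) (C : set X) (z : X) (zs : X -> R) :
  (forall x xs, A x xs -> is_dual xs) ->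
  C !=set0 -> closed C -> convex_set (C : set (convex_lmodType X)) ->
  is_dual zs ->
  (mono_related z zs (gra (op_sum A (normal_cone C))) <->
   (mono_related z zs (gra (op_sum A (ind_op C))) /\
    z \in \bigcap_(a in dom A `&` C) [set a + t | t in tangent_cone C a])).
Proof.
move=> Adual _ _ _ zd; split.
- move=> hm; split.
    move=> x xs; rewrite /gra /op_sum /= => -[a Aa [b [Cx ->] <-]].
    apply: hm; exists a => //; exists (fun _ => 0) => //; exact: nc_zero.
  rewrite inE => a [[b Ab] Ca]; exists (z - a); last by rewrite addrC subrK.
  apply: ge_ereal_sup => _ [ns hn <-]; rewrite lee_fin.
  have nd : is_dual ns by case: hn => _ [].
  suff : 0 <= ns (a - z).
    by rewrite -opprB (dualN _ _ nd) oppr_ge0.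
  rewrite leNgt; apply/negP => hlt.
  set K := b (a - z) - zs (a - z).
  set t := (`|K| + 1) / - ns (a - z).
  have hN : 0 < - ns (a - z) by rewrite oppr_gt0.
  have t0 : 0 <= t by rewrite divr_ge0 // ltW.
  have := hm a (b \+ (fun v => t * ns v)).
  have H : gra (op_sum A (normal_cone C)) (a, b \+ (fun v => t * ns v)).
    by exists b => //; exists (fun v => t * ns v) => //; exact: nc_scale.
  move=> /(_ H) /=.
  have -> : t * ns (a - z) = - (`|K| + 1).
    rewrite /t; field; by rewrite lt_eqF.
  have := ler_norm K; rewrite /K; lra.
- move=> [hm hz] x xs; rewrite /gra /op_sum /= => -[a Aa [ns hn <-]].
  have [Cx [nd _]] := hn.
  have := hm x (a \+ (fun _ => 0)).
  have H : gra (op_sum A (ind_op C)) (x, a \+ (fun _ => 0)).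
    by exists a => //; exists (fun _ => 0).
  move=> /(_ H) /=; rewrite addr0 => h1.
  move: hz; rewrite inE => /(_ x) [].
    by split => //; exists a.
  move=> t ht zE; subst z.
  have : ((ns t)%:E <= 0)%E.
    apply: le_trans ht; apply: ereal_sup_ubound; by exists ns.
  rewrite lee_fin => h2.
  move: h1; rewrite !opprD !addrA !subrr !add0r (dualN _ _ nd); lra.
Qed.
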